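(* Let $a\in\hat{\mathbb Z}$, $Y^*\in C_+([0,\infty))$, $F\in L^1_{\mathrm{loc}}([0,\infty))$ with $F\ge0$, and let $(\mathscr G_t)$ be a filtration to which $Y^*$, $F$ and $\mathbf W$ are adapted and with respect to which $\mathbf W$ is a Brownian motion. Suppose $Y^*(t)=Y^*(0)+W_a(t)+\beta\int_0^t\big(\frac1{Y^*(s)}-F(s)\big)ds$ for all $t\ge0$. Then for all $t'\le t''$ in $[0,\infty)$, almost surely, $Y^*(t'')-\inf_{s\in[t',t'']}Y^*(s)=\sup_{s\in[t',t'']}(Y^*(t'')-Y^*(s))\le Q^{t'}_a(t'')$ and $\sup_{s<t,\ s,t\in[t',t'']}(Y^*(t)-Y^*(s))\le Q^{t',t''}_a:=\sup_{t\in[t',t'']}Q^{t'}_a(t)$.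
   Context: Fixed $\beta\ge1$. $\hat{\mathbb Z}=\tfrac12+\mathbb Z$; $W_a=B_{a+1/2}-B_{a-1/2}$ where $(B_i)_{i\in\mathbb Z}$ are independent standard Brownian motions; $C_+([0,\infty))=\{y\in C([0,\infty)):y(t)>0\ \forall t\}$. For $t_1\ge0$, $Q^{t_1}_a$ denotes the Bessel-type process started from $0$ at time $t_1$: the process in $C([t_1,\infty))$, strictly positive on $(t_1,\infty)$, solving $Q^{t_1}_a(t)=W_a(t)-W_a(t_1)+\int_{t_1}^t\frac{\beta}{Q^{t_1}_a(s)}ds$, $t\ge t_1$. *)

(* Defs.v *)
From HB Require Import structures.
From mathcomp Require Import all_boot all_order all_algebra.
From mathcomp Require Import all_classical all_reals all_analysis.
Set Implicit Arguments. Unset Strict Implicit. Unset Printing Implicit Defensive.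
Import Order.TTheory GRing.Theory Num.Theory.
Import numFieldNormedType.Exports.
Local Open Scope classical_set_scope.
Local Open Scope ring_scope.

Definition filtration {d} {Omega : measurableType d} {R : realType}
  (G : R -> set (set Omega)) : Prop :=
  (forall t, 0 <= t -> sigma_algebra setT (G t) /\ G t `<=` measurable) /\
  (forall s t, 0 <= s -> s <= t -> G s `<=` G t).

Definition adapted {Omega : Type} {R : realType}
  (G : R -> set (set Omega)) (X : Omega -> R -> R) : Prop :=
  forall t, 0 <= t -> forall E : set R, measurable E ->
    G t [set w | E (X w t)].

Definition natural_filtration {Omega : Type} {R : realType}
  (B : int -> Omega -> R -> R) (t : R) : set (set Omega) :=
  <<s [set A | exists i r (E : set R), [/\ 0 <= r, r <= t, measurable E &
                 A = [set w | E (B i w r)]]] >>.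

Definition incr_event {Omega : Type} {R : realType}
  (X : int -> Omega -> R -> R) (J : seq int) (E : int -> set R) (s t : R)
  : set Omega :=
  [set w | forall i, i \in J -> E i (X i w t - X i w s)].

Definition indep_std_BM_wrt {d} {Omega : measurableType d} {R : realType}
  (P : probability Omega R) (G : R -> set (set Omega))
  (B : int -> Omega -> R -> R) : Prop :=
  (forall i, adapted G (B i)) /\
  {ae P, forall w, forall i,
     B i w 0 = 0 /\ {within `[0, +oo[, continuous (B i w)}} /\
  (forall s t, 0 <= s -> s < t -> forall (J : seq int) (E : int -> set R),
     uniq J -> (forall i, measurable (E i)) -> forall A, G s A ->
     P (A `&` incr_event B J E s t) =
       (P A * \prod_(i <- J) normal_prob 0 (Num.sqrt (t - s)) (E i))%E).

(* A family X is a (G_t)-Brownian motion family (given that it is already a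
   Brownian motion family): it is adapted and its increments after s are
   independent of G_s. *)
Definition indep_incr_wrt {d} {Omega : measurableType d} {R : realType}
  (P : probability Omega R) (G : R -> set (set Omega))
  (X : int -> Omega -> R -> R) : Prop :=
  forall s t, 0 <= s -> s < t -> forall (J : seq int) (E : int -> set R),
    (forall i, measurable (E i)) -> forall A, G s A ->
    P (A `&` incr_event X J E s t) = (P A * P (incr_event X J E s t))%E.

(* W_a = B_{a+1/2} - B_{a-1/2}; the half-integer a = k + 1/2 is encoded by
   the integer k, so W_k = B_{k+1} - B_k. *)
Definition Wfam {Omega : Type} {R : realType} (B : int -> Omega -> R -> R)
  : int -> Omega -> R -> R :=
  fun k w t => B (k + 1)%R w t - B k w t.

(* Main.v *)
Require Import Defs.
From HB Require Import structures.
From mathcomp Require Import all_boot all_order all_algebra.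
From mathcomp Require Import all_classical all_reals all_analysis.
From mathcomp Require Import measurable_realfun lebesgue_integral_differentiation.
From mathcomp Require Import ring lra.
Import Order.TTheory GRing.Theory Num.Theory.
Import numFieldNormedType.Exports.
Local Open Scope classical_set_scope.
Local Open Scope ring_scope.
Lemma within_inv (R : realType) (A : set R) (f : R -> R) :
  {within A, continuous f} -> (forall x, A x -> f x != 0) ->
  {within A, continuous (fun x => (f x)^-1)}.
Proof.
move=> cf f0.
have E1 := @continuous_subspace_in _ A _ (fun x : subspace A => (f x)^-1).
have E2 := @continuous_subspace_in _ A _ (f : subspace A -> R).
rewrite /= in E1 E2.
have cf' : {in A, continuous (f : subspace A -> R)} by rewrite -E2.
rewrite E1 => x Ax.
apply: continuousV; first by apply: f0; exact/set_mem.
exact: cf'.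
Qed.

Lemma within_eps (R : realType) (A : set R) (f : R -> R) x e :
  {within A, continuous f} -> A x -> 0 < e ->
  exists2 d, 0 < d & forall y, A y -> `|x - y| < d -> `|f x - f y| < e.
Proof.
move=> /subspace_continuousP cf Ax e0.
have := cf x Ax; move/cvgrPdist_lt => /(_ e e0).
rewrite near_withinE => -[d /= d0 H].
exists d => // y Ay xy; exact: H.
Qed.

Section Key.
Variables (R : realType) (beta : R) (y f q wW : R -> R) (t1 : R).
Hypothesis beta0 : 0 < beta.
Hypothesis t10 : 0 <= t1.
Hypothesis cy : {within `[0, +oo[, continuous y}.
Hypothesis ypos : forall r, 0 <= r -> 0 < y r.
Hypothesis f0 : forall r, 0 <= r -> 0 <= f r.
Hypothesis fint : forall r, 0 <= r ->
  lebesgue_measure.-integrable `[0, r] (EFin \o f).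
Hypothesis yeq : forall r, 0 <= r ->
  y r = y 0 + wW r + beta * Rintegral lebesgue_measure `[0, r]
                (fun s => (y s)^-1 - f s).
Hypothesis cq : {within `[t1, +oo[, continuous q}.
Hypothesis qpos : forall r, t1 < r -> 0 < q r.
Hypothesis qeq : forall r, t1 <= r ->
  ((q r - (wW r - wW t1))%:E =
   beta%:E * \int[lebesgue_measure]_(s in `[t1, r]) ((q s)^-1)%:E)%E.

Lemma q_t1 : q t1 = 0.
Proof.
have := @qeq t1 (lexx t1); rewrite set_itv1 integral_set1 mule0 subrr subr0.
by move=> [].
Qed.

Lemma q_ge0 r : t1 <= r -> 0 <= q r.
Proof.
rewrite le_eqVlt => /predU1P[<-|/qpos/ltW//]; by rewrite q_t1.
Qed.

Lemma mq r : t1 <= r ->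
  measurable_fun `[t1, r] (fun s => ((q s)^-1)%:E).
Proof.
move=> t1r; apply/measurable_EFinP.
rewrite (@itv_bndbnd_setU _ _ _ (BRight t1)) ?bnd_simp// set_itv1.
apply/measurable_funU => //; split; first exact: measurable_fun_set1.
apply: subspace_continuous_measurable_fun => //.
apply: within_inv.
  apply: continuous_subspaceW cq => x /=; rewrite !in_itv/= => /andP[/ltW -> _].
  by [].
by move=> x /=; rewrite in_itv/= => /andP[/qpos/gt_eqF -> _].
Qed.

Lemma yinvint r : 0 <= r ->
  lebesgue_measure.-integrable `[0, r] (EFin \o (fun s => (y s)^-1)).
Proof.
move=> r0.
apply: continuous_compact_integrable; first exact: segment_compact.
apply: within_inv.
  apply: continuous_subspaceW cy => x /=; rewrite !in_itv/= => /andP[-> _].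
  by [].
by move=> x /=; rewrite in_itv/= => /andP[/ypos/gt_eqF -> _].
Qed.

Lemma yint r : 0 <= r ->
  lebesgue_measure.-integrable `[0, r] (EFin \o (fun s => (y s)^-1 - f s)).
Proof.
move=> r0.
have := integrableB _ (yinvint _ r0) (@fint r r0).
by apply.
Qed.

Lemma stepD u r : 0 <= u -> u <= r ->
  y r - y u = wW r - wW u + beta * Rintegral lebesgue_measure `]u, r]
                (fun s => (y s)^-1 - f s).
Proof.
move=> u0 ur.
have r0 : 0 <= r by exact: le_trans ur.
rewrite (yeq _ r0) (yeq _ u0).
rewrite -(@Rintegral_itvB _ _ (BLeft 0) (BRight r) u) ?bnd_simp//; last exact: yint.
by rewrite mulrBr; ring.
Qed.

Lemma stepE u r : t1 <= u -> u <= r ->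
  ((q r - q u - (wW r - wW u))%:E =
   beta%:E * \int[lebesgue_measure]_(s in `]u, r]) ((q s)^-1)%:E)%E.
Proof.
move=> t1u ur.
have t1r : t1 <= r by exact: le_trans ur.
have Er := qeq _ t1r; have Eu := qeq _ t1u.
rewrite (@itv_bndbnd_setU _ _ _ (BRight u)) ?bnd_simp// in Er.
rewrite ge0_integral_setU// in Er; last 3 first.
- by rewrite -itv_bndbnd_setU ?bnd_simp//; exact: mq.
- move=> x; rewrite -itv_bndbnd_setU ?bnd_simp// /= in_itv/= => /andP[t1x _].
  by rewrite lee_fin invr_ge0 q_ge0.
- apply/disj_setPS => x [] /=; rewrite !in_itv/= => /andP[_ xu] /andP[ux _].
  by move: (lt_le_trans ux xu); rewrite ltxx.
move: Er Eu.
set I1 := (\int[lebesgue_measure]_(x in `[t1, u]) _)%E.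
set I2 := (\int[lebesgue_measure]_(x in `]u, r]) _)%E.
have I10 : (0 <= I1)%E.
  apply: integral_ge0 => x /=; rewrite in_itv/= => /andP[t1x _].
  by rewrite lee_fin invr_ge0 q_ge0.
have I20 : (0 <= I2)%E.
  apply: integral_ge0 => x /=; rewrite in_itv/= => /andP[ux _].
  by rewrite lee_fin invr_ge0 q_ge0 // (le_trans t1u) // ltW.
move: I10 I20; case: I1 => [x1| |] //; case: I2 => [x2| |] //.
- move=> _ _ [] E1 [] E2; congr EFin.
  rewrite (_ : beta * x2 = beta * (x1 + x2) - beta * x1); last by ring.
  rewrite -E1 -E2; ring.
- move=> _ _ E1 _; move: E1; rewrite addey // muleC gt0_mulye ?lte_fin //.
- move=> _ _ _ E2; move: E2; rewrite muleC gt0_mulye ?lte_fin //.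
- move=> _ _ _ E2; move: E2; rewrite muleC gt0_mulye ?lte_fin //.
Qed.

Lemma stepF u r : t1 <= u -> u < r ->
  (forall x, u < x -> x <= r -> q x < y x) ->
  y r - y u <= q r - q u.
Proof.
move=> t1u ur H.
have u0 : 0 <= u := le_trans t10 t1u.
have r0 : 0 <= r := le_trans u0 (ltW ur).
have sub : `]u, r] `<=` `[0, r].
  by move=> x /=; rewrite !in_itv/= => /andP[ux ->]; rewrite (le_trans u0) // ltW.
have gint : lebesgue_measure.-integrable `]u, r]
    (EFin \o (fun s => (y s)^-1 - f s)).
  by apply: (integrableS _ _ _ (yint _ r0)) => //; exact: sub.
have yiint : lebesgue_measure.-integrable `]u, r] (EFin \o (fun s => (y s)^-1)).
  by apply: (integrableS _ _ _ (yinvint _ r0)) => //; exact: sub.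
rewrite (@stepD u r u0 (ltW ur)).
have E := @stepE u r t1u (ltW ur).
set G := Rintegral _ _ _.
suff : ((beta * G)%:E <= beta%:E *
          \int[lebesgue_measure]_(s in `]u, r]) ((q s)^-1)%:E)%E.
  by rewrite -E lee_fin => h; lra.
rewrite EFinM; apply: lee_wpmul2l; first by rewrite lee_fin ltW.
rewrite /G /Rintegral fineK; last exact: integrable_fin_num.
apply: (le_trans (le_integral _ gint yiint _)) => //.
  move=> x /set_mem /= xI; rewrite lee_fin.
  have : 0 <= x by move: xI; rewrite in_itv/= => /andP[ux _]; rewrite (le_trans u0) // ltW.
  move=> /f0 fx; lra.
apply: ge0_le_integral => //.
- move=> x /=; rewrite in_itv/= => /andP[ux _].
  by rewrite lee_fin invr_ge0 ltW // ypos // (le_trans u0) // ltW.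
- exact: measurable_int yiint.
- apply: measurable_funS (mq _ (le_trans t1u (ltW ur))) => //.
  by move=> x /=; rewrite !in_itv/= => /andP[ux ->]; rewrite (le_trans t1u) // ltW.
- move=> x /=; rewrite in_itv/= => /andP[ux xr].
  have qx : 0 < q x by apply: qpos; exact: le_lt_trans ux.
  have hq := H x ux xr.
  by rewrite lee_fin lef_pV2 ?posrE ?(lt_trans qx hq) ?qx // ltW.
Qed.

Lemma stepG s t : t1 <= s -> s <= t -> y t - y s <= q t.
Proof.
move=> t1s st.
have s0 : 0 <= s := le_trans t10 t1s.
have ys := ypos _ s0.
rewrite leNgt; apply/negP => Dt.
pose D r := y r - y s - q r.
have Dt' : 0 < D t by rewrite /D; lra.
pose S := [set r | (s <= r <= t) /\ D r <= 0].
have Ss : S s.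
  split; first by rewrite lexx st.
  by rewrite /D subrr sub0r oppr_le0 q_ge0.
have hs : has_sup S.
  by split; [exists s | exists t => r [/andP[_ ->]]].
set u := sup S.
have su : s <= u := sup_upper_bound hs Ss.
have ut : u <= t by apply: ge_sup; [exists s | move=> r [/andP[_ ->]]].
have u0 : 0 <= u := le_trans s0 su.
have t1u : t1 <= u := le_trans t1s su.
have Du : D u <= 0.
  rewrite leNgt; apply/negP => Du.
  have e0 : 0 < D u / 2 by rewrite divr_gt0.
  have [d1 d10 H1] := @within_eps _ _ _ u (D u / 2) cy
    (ltac:(by rewrite /= in_itv/= andbT)) e0.
  have [d2 d20 H2] := @within_eps _ _ _ u (D u / 2) cq
    (ltac:(by rewrite /= in_itv/= andbT)) e0.
  have d0 : 0 < Num.min d1 d2 by rewrite lt_min d10 d20.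
  have [r Sr ur] := sup_adherent d0 hs.
  have ru : r <= u := sup_upper_bound hs Sr.
  case: Sr => /andP[sr rt] Dr.
  have r0 : 0 <= r := le_trans s0 sr.
  have urd : `|u - r| < Num.min d1 d2.
    by rewrite ger0_norm ?subr_ge0 //; rewrite -/u in ur; lra.
  move: urd; rewrite lt_min => /andP[ud1 ud2].
  have h1 := H1 r (ltac:(by rewrite /= in_itv/= andbT)) ud1.
  have h2 := H2 r (ltac:(by rewrite /= in_itv/= andbT (le_trans t1s sr))) ud2.
  move: h1 h2; rewrite !ltr_distlC => /andP[h1 h1'] /andP[h2 h2'].
  rewrite /D in Dr Du h1 h1' h2 h2'; lra.
have ut' : u < t.
  rewrite lt_neqAle ut andbT; apply/eqP => ut2.
  by rewrite ut2 in Du; lra.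
have key : y t - y u <= q t - q u.
  apply: stepF => // x ux xt.
  have Dx : 0 < D x.
    rewrite ltNge; apply/negP => Dx.
    have Sx : S x by split=> //; rewrite xt andbT (le_trans su) // ltW.
    have : x <= u := sup_upper_bound hs Sx.
    by rewrite leNgt ux.
  rewrite /D in Dx; lra.
rewrite /D in Du Dt'; lra.
Qed.

End Key.

Theorem lemma3p2 (R : realType) (beta : R) (d : measure_display)
  (Omega : measurableType d) (P : probability Omega R)
  (B : int -> Omega -> R -> R) (G : R -> set (set Omega))
  (k : int) (Y F : Omega -> R -> R) (Q : R -> Omega -> R -> R) :
  1 <= beta ->
  (* (B_i) independent standard Brownian motions *)
  indep_std_BM_wrt P (natural_filtration B) B ->
  (* G a filtration; Y*, F, W adapted; W a G-Brownian motion *)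
  filtration G ->
  adapted G Y -> adapted G F -> (forall j, adapted G (Wfam B j)) ->
  indep_incr_wrt P G (Wfam B) ->
  (* Y* in C_+([0,oo)) *)
  (forall w, {within `[0, +oo[, continuous (Y w)} /\
             (forall t, 0 <= t -> 0 < Y w t)) ->
  (* F >= 0 and F in L^1_loc([0,oo)) *)
  (forall w, (forall t, 0 <= t -> 0 <= F w t) /\
     (forall t, 0 <= t ->
        lebesgue_measure.-integrable `[0, t] (EFin \o F w))) ->
  (* the equation for Y* *)
  {ae P, forall w, forall t, 0 <= t ->
     Y w t = Y w 0 + Wfam B k w t +
       beta * Rintegral lebesgue_measure `[0, t]
                (fun s => (Y w s)^-1 - F w s)} ->
  (* Q t1 is the Bessel-type process Q^{t1}_a started from 0 at time t1 *)
  (forall t1, 0 <= t1 -> {ae P, forall w,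
     {within `[t1, +oo[, continuous (Q t1 w)} /\
     (forall t, t1 < t -> 0 < Q t1 w t) /\
     (forall t, t1 <= t ->
        ((Q t1 w t - (Wfam B k w t - Wfam B k w t1))%:E =
          beta%:E * \int[lebesgue_measure]_(s in `[t1, t]) ((Q t1 w s)^-1)%:E)%E)}) ->
  forall t' t'', 0 <= t' -> t' <= t'' ->
  {ae P, forall w,
     [/\ Y w t'' - inf [set Y w s | s in `[t', t'']] =
           sup [set Y w t'' - Y w s | s in `[t', t'']],
         sup [set Y w t'' - Y w s | s in `[t', t'']] <= Q t' w t'' &
         sup [set x | exists s t, [/\ t' <= s, s < t, t <= t'' &
                                      x = Y w t - Y w s]]
           <= sup [set Q t' w t | t in `[t', t'']]]}.
Proof.
move=> beta1 _ _ _ _ _ _ HYc HF Hy HQ t' t'' t'0 tt.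
apply: filterS2 Hy (HQ t' t'0) => w Hyw [cQ [Qpos Qeq]].
have beta0 : 0 < beta by apply: lt_le_trans beta1.
have [cy ypos] := HYc w.
have [f0 fint] := HF w.
have key : forall s t, t' <= s -> s <= t -> Y w t - Y w s <= Q t' w t.
  move=> s t t's st.
  exact: (@stepG R beta (Y w) (F w) (Q t' w) (Wfam B k w) t' beta0 t'0 cy ypos f0 fint Hyw cQ Qpos Qeq s t t's st).
have Q0 : Q t' w t' = 0 by exact: (@q_t1 R beta (Q t' w) (Wfam B k w) t' Qeq).
have ypos' : forall s, t' <= s -> 0 < Y w s.
  by move=> s t's; apply: ypos; exact: le_trans t's.
have t'in : t' \in `[t', t'']%R by rewrite in_itv/= lexx tt.
have t''in : t'' \in `[t', t'']%R by rewrite in_itv/= lexx tt.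
set A := [set Y w s | s in `[t', t'']].
set Bs := [set Y w t'' - Y w s | s in `[t', t'']].
have hB : has_sup Bs.
  split; first by exists (Y w t'' - Y w t'), t'.
  exists (Y w t'') => _ [s /= sI <-].
  move: sI; rewrite in_itv/= => /andP[t's _].
  by have := ypos' s t's; lra.
have Bne : Bs !=set0 by case: hB.
have Ane : A !=set0 by exists (Y w t'), t'.
have hA : has_lbound A.
  exists 0 => _ [s /= sI <-]; move: sI; rewrite in_itv/= => /andP[t's _].
  exact/ltW/ypos'.
have cQ' : {within `[t', t''], continuous (Q t' w)}.
  apply: continuous_subspaceW cQ => x /=; rewrite !in_itv/= => /andP[-> _].
  by [].
have [c cI cmax] := EVT_max tt cQ'.
set Qs := [set Q t' w t | t in `[t', t'']].
have hQ : has_sup Qs.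
  split; first by exists (Q t' w t'), t'.
  exists (Q t' w c) => _ [s /= sI <-]; exact: cmax.
split.
- apply/eqP; rewrite eq_le; apply/andP; split.
  + have : inf A >= Y w t'' - sup Bs.
      apply: lb_le_inf => // _ [s sI <-].
      have : Y w t'' - Y w s <= sup Bs by apply: (sup_upper_bound hB); exists s.
      lra.
    lra.
  + apply: ge_sup => // _ [s sI <-].
    have : inf A <= Y w s by apply: (ge_inf hA); exists s.
    lra.
- apply: ge_sup => // _ [s /= sI <-].
  by apply: key; move: sI; rewrite in_itv/= => /andP[].
- have [Cne|Cne] := pselect ([set x | exists s t, [/\ t' <= s, s < t, t <= t'' &
                                      x = Y w t - Y w s]] !=set0).
    apply: ge_sup => // _ [s [t [t's st tt'' ->]]].
    apply: (le_trans (key s t t's (ltW st))).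
    apply: (sup_upper_bound hQ); exists t => //.
    by rewrite /= in_itv/= tt'' (le_trans t's) // ltW.
  rewrite (_ : [set x | _] = set0); last first.
    by apply/seteqP; split => x // Cx; exfalso; apply: Cne; exists x.
  rewrite sup0 -Q0; apply: (sup_upper_bound hQ); by exists t'.
Qed.
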